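(* Let $q$ be a prime power, $n\ge 1$, and $t$ transcendental over $\mathbb{F}_q$. Let $L(x)\in\mathbb{F}_q[x]$ be a monic $q$-polynomial of $q$-degree $n$. Then $(L(x)+tx)/x$ is irreducible over $\mathbb{F}_q(t)$; consequently $q^n-1$ divides the order of the Galois group of $L(x)+tx$ over $\mathbb{F}_q(t)$.
   Context: A $q$-polynomial over a field $F\supseteq\mathbb{F}_q$ is a polynomial of the form $a_0x+a_1x^q+\cdots+a_nx^{q^n}\in F[x]$; if $a_n\neq 0$ its $q$-degree is $n$. *)

(* Defs.v *)
From HB Require Import structures.
From mathcomp Require Import all_boot all_order all_algebra all_fingroup all_field.
From mathcomp Require Import fraction.
Set Implicit Arguments. Unset Strict Implicit. Unset Printing Implicit Defensive.
Import GRing.Theory.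
Local Open Scope ring_scope.

(* F_q(t): the rational function field in the transcendental t over F. *)
Definition ratfun (F : fieldType) := {fraction {poly F}}.

Definition tvar (F : fieldType) : ratfun F := tofrac 'X.

Definition cst (F : fieldType) (c : F) : ratfun F := tofrac c%:P.

(* p is a q-polynomial: only monomials x^(q^i) occur (so no constant term) *)
Definition is_qpoly (F : fieldType) (q : nat) (p : {poly F}) : Prop :=
  forall i : nat, p`_i != 0 -> exists k : nat, i = (q ^ k)%N.

(* q-degree of a nonzero q-polynomial is n iff its degree is q^n *)
Definition has_qdeg (F : fieldType) (q : nat) (p : {poly F}) (n : nat) : Prop :=
  size p = (q ^ n).+1.

Definition Lt (F : fieldType) (L : {poly F}) : {poly ratfun F} :=
  map_poly (@cst F) L + (tvar F)%:P * 'X.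

(* Main.v *)
Require Import Defs.
From HB Require Import structures.
From mathcomp Require Import all_boot all_order all_algebra all_fingroup all_field.
From mathcomp Require Import fraction.
From mathcomp Require Import all_solvable generic_quotient polyXY ring.
Import GRing.Theory FinRing.Theory.
Local Open Scope ring_scope.
Local Open Scope quotient_scope.

Lemma factor_lemma (F : fieldType) (f : {poly F}) (G H : {poly {poly F}}) (d : {poly F}) :
  d != 0 -> G * H = d%:P * (f^:P + 'Y) -> (size H <= 1)%N \/ (size G <= 1)%N.
Proof.
move=> dn0 eGH; set P0 := f^:P + 'Y in eGH.
have sP0 : swapXY P0 = 'X - (- f)%:P.
  by rewrite /P0 rmorphD /= swapXY_map_polyC swapXY_Y polyCN opprK addrC.
have P0n0 : P0 != 0.
  rewrite -swapXY_eq0 sP0 -size_poly_eq0 size_XsubC //.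
pose ev u := (swapXY u).[- f].
have evM u v : ev (u * v) = ev u * ev v by rewrite /ev rmorphM hornerM.
have evP0 : ev P0 = 0 by rewrite /ev sP0 hornerXsubC subrr.
have : ev G * ev H = 0 by rewrite -evM eGH evM evP0 mulr0.
have key u : ev u = 0 -> exists Q, u = Q * P0.
  move=> eu; have /factor_theorem [Q eQ] : root (swapXY u) (- f) by apply/eqP.
  exists (swapXY Q); by rewrite -[u]swapXYK eQ rmorphM /= -sP0 swapXYK.
have dP : d%:P != 0 :> {poly {poly F}} by rewrite polyC_eq0.
move/eqP; rewrite mulf_eq0 => /orP [/eqP/key [Q eQ] | /eqP/key [Q eQ]].
  left.
  have e2 : Q * H = d%:P.
    apply: (mulIf P0n0); by rewrite mulrAC -eQ eGH mulrC.
  have Qn0 : Q != 0 by apply: contraNneq dP => Q0; rewrite -e2 Q0 mul0r.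
  have Hn0 : H != 0 by apply: contraNneq dP => H0; rewrite -e2 H0 mulr0.
  have := size_mul Qn0 Hn0; rewrite e2 size_polyC dn0 /=.
  move: Qn0; rewrite -size_poly_gt0; case: (size Q) => [|m] // _.
  by rewrite addSn /= => ->; apply: leq_addl.
right.
have e2 : G * Q = d%:P.
  apply: (mulIf P0n0); by rewrite -mulrA -eQ eGH mulrC.
have Qn0 : Q != 0 by apply: contraNneq dP => Q0; rewrite -e2 Q0 mulr0.
have Gn0 : G != 0 by apply: contraNneq dP => H0; rewrite -e2 H0 mul0r.
have := size_mul Gn0 Qn0; rewrite e2 size_polyC dn0 /=.
move: Qn0; rewrite -size_poly_gt0; case: (size Q) => [|m] // _.
by rewrite addnS /= => ->; apply: leq_addr.
Qed.
Lemma frac_repr (R: idomainType) (x : {fraction R}) :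
  exists a b, b != 0 /\ x * tofrac b = tofrac a.
Proof.
elim/quotW: x => r.
exists \n_r, \d_r; split; first exact: denom_ratioP.
have E : forall y, tofrac y = (\pi_({fraction R}) (Ratio y 1) : {fraction R}).
  by move=> y; rewrite /tofrac /= /FracField.tofrac; unlock.
rewrite !E.
rewrite -[_ * _]FracField.pi_mul.
apply/eqmodP; rewrite /= FracField.equivfE /FracField.mulf /=.
rewrite !numden_Ratio ?mulf_neq0 ?oner_neq0 ?denom_ratioP //.
by rewrite !mulr1 mulrC.
Qed.

Lemma poly_clear (R : idomainType) (A : {poly {fraction R}}) :
  exists d, exists A' : {poly R}, d != 0 /\ tofrac d *: A = map_poly (@tofrac R) A'.
Proof.
elim/poly_ind: A => [|A c [d [A' [dn0 eA]]]].
  by exists 1, 0; rewrite oner_neq0 scaler0 rmorph0.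
have [a [b [bn0 eb]]] := frac_repr _ c.
exists (d * b), (A' * b%:P * 'X + (d * a)%:P); split; first by rewrite mulf_neq0.
rewrite rmorphD rmorphM rmorphM /= map_polyX !map_polyC /= -eA rmorphM /= tofracM -eb.
rewrite scalerDr -!mul_polyC !polyCM; ring.
Qed.

Lemma hcst (F : fieldType) (L : {poly F}) :
  map_poly (@cst F) L = map_poly (@tofrac _) (L^:P).
Proof.
apply/polyP=> i; rewrite coef_map_id0; last by rewrite /cst polyC0 rmorph0.
by rewrite !coef_map.
Qed.

Lemma Lt_eq (F : fieldType) (L : {poly F}) : L`_0 = 0 ->
  Lt L = map_poly (@tofrac _) ((L %/ 'X)^:P + 'Y) * 'X.
Proof.
move=> L0; set f := L %/ 'X.
have eL : L = f * 'X.
  rewrite /f divpK //; rewrite -['X]subr0 -polyC0 dvdp_XsubCl /root horner_coef0 L0 //.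
rewrite /Lt hcst eL rmorphM /= map_polyX rmorphM /= map_polyX.
by rewrite rmorphD /= map_polyC mulrDl.
Qed.

Lemma P_eq (F : fieldType) (L : {poly F}) : L`_0 = 0 ->
  Lt L %/ 'X = map_poly (@tofrac _) ((L %/ 'X)^:P + 'Y).
Proof. by move=> L0; rewrite Lt_eq // mulpK ?polyX_eq0. Qed.

Lemma size_P (F : fieldType) (L : {poly F}) : L`_0 = 0 -> (2 < size L)%N ->
  size (Lt L %/ 'X) = (size L).-1.
Proof.
move=> L0 sL; rewrite P_eq //.
have tinj : injective (@tofrac {poly F}) by move=> x y /eqP; rewrite tofrac_eq => /eqP.
have sf : size (L %/ 'X) = (size L).-1.
  by rewrite size_divp ?polyX_eq0 // size_polyX subn1.
set f := L %/ 'X in sf *.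
rewrite size_map_inj_poly ?rmorph0 // size_polyDl (size_map_inj_poly (@polyC_inj _)) ?polyC0 // size_polyC polyX_eq0 /= sf.
by case: (size L) sL => [|[|[|]]].
Qed.

Lemma irr_part (F : fieldType) (L : {poly F}) : L`_0 = 0 -> (2 < size L)%N ->
  irreducible_poly (Lt L %/ 'X).
Proof.
move=> L0 sL; rewrite P_eq //; set f := L %/ 'X.
have sf : (1 < size f)%N by rewrite /f size_divp ?polyX_eq0 // size_polyX; case: (size L) sL => [|[|[|]]].
set P0 := f^:P + 'Y.
have tinj : injective (@tofrac {poly F}) by move=> x y /eqP; rewrite tofrac_eq => /eqP.
have sP0 : size P0 = size f.
  rewrite /P0 size_polyDl size_map_polyC // size_polyC polyX_eq0 //.
have P0n0 : P0 != 0 by rewrite -size_poly_eq0 sP0; case: (size f) sf.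
set P := map_poly _ P0.
have sP : size P = size f by rewrite size_map_inj_poly // ?rmorph0.
have Pn0 : P != 0 by rewrite -size_poly_eq0 sP; case: (size f) sf.
split; first by rewrite sP.
move=> G sG GP.
have Gn0 : G != 0.
  by apply: contraNneq Pn0 => G0; move: GP; rewrite G0 dvd0p.
set H := P %/ G.
have eP : P = H * G by rewrite divpK.
have Hn0 : H != 0 by apply: contraNneq Pn0 => H0; rewrite eP H0 mul0r.
have [sH1|sH1] := eqVneq (size H) 1%N.
  have [c eH] : exists c, H = c%:P by exists H`_0; apply/size1_polyC; rewrite sH1.
  have cn0 : c != 0 by move: Hn0; rewrite eH polyC_eq0.
  by rewrite eP eH mul_polyC eqp_sym eqp_scale.
exfalso.
have [dG [G' [dGn0 eG]]] := poly_clear _ G.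
have [dH [H' [dHn0 eH]]] := poly_clear _ H.
have e : G' * H' = (dG * dH)%:P * P0.
  apply: (map_inj_poly tinj (rmorph0 _)).
  rewrite [LHS]rmorphM [RHS]rmorphM /= -eG -eH map_polyC /= tofracM -/P eP.
  by rewrite -scalerAl -scalerAr scalerA mul_polyC [H * G]mulrC.
have := factor_lemma _ f _ _ _ (mulf_neq0 dGn0 dHn0) e.
have tdG : tofrac dG != 0 by rewrite tofrac_eq0.
have tdH : tofrac dH != 0 by rewrite tofrac_eq0.
have szG : size G' = size G.
  by rewrite -(size_map_inj_poly tinj (rmorph0 _)) -eG; exact: (size_scale G tdG).
have szH : size H' = size H.
  by rewrite -(size_map_inj_poly tinj (rmorph0 _)) -eH; exact: (size_scale H tdH).
rewrite szG szH.
move: sG sH1 Gn0 Hn0; rewrite -!size_poly_eq0.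
by case: (size G) => [|[|m]] // _; case: (size H) => [|[|k]] // _ _ _ [].
Qed.

Lemma natr_card (F : finFieldType) : (#|F|)%:R = 0 :> F.
Proof.
have := @expg_cardG _ [set: F] (GRing.one F) (in_setT _).
by rewrite cardsT zmodXgE.
Qed.

Lemma natr_cardX (F : finFieldType) k : (0 < k)%N -> ((#|F| ^ k)%N)%:R = 0 :> F.
Proof. by case: k => // k _; rewrite expnS natrM natr_card mul0r. Qed.

Lemma deriv_qpoly (F : finFieldType) (L : {poly F}) :
  is_qpoly #|F| L -> L^`() = (L`_1)%:P.
Proof.
move=> hq; apply/polyP => i; rewrite coef_deriv coefC.
case: i => [|i] /=; first by rewrite mulr1n.
have [->|/hq [k ek]] := eqVneq L`_i.+2 0; first by rewrite mul0rn.
case: k ek => [|k] ek; first by rewrite expn0 in ek.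
rewrite -mulr_natr.
have -> : (i.+2)%:R = 0 :> F by rewrite ek natr_cardX.
by rewrite mulr0.
Qed.

Lemma sep_Lt (F : finFieldType) (L : {poly F}) :
  is_qpoly #|F| L -> separable_poly (Lt L).
Proof.
move=> hq.
have dL : (Lt L)^`() = (tofrac ((L`_1)%:P + 'X))%:P.
  rewrite /Lt derivD hcst !deriv_map deriv_qpoly // map_polyC /= map_polyC /=.
  rewrite mul_polyC derivZ derivX -alg_polyC.
  by rewrite !alg_polyC tofracD polyCD.
rewrite unlock dL -alg_polyC coprimepZr ?coprimep1 //.
rewrite tofrac_eq0 addrC -size_poly_eq0 size_XaddC //.
Qed.

Theorem mainTheorem7 (F : finFieldType) (n : nat) (L : {poly F}) :
  (1 <= n)%N ->
  is_qpoly #|F| L -> has_qdeg #|F| L n -> L \is monic ->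
  irreducible_poly (Lt L %/ 'X) /\
  (forall (K : splittingFieldType (ratfun F)) (E : {subfield K}),
     splittingFieldFor 1%VS (map_poly (in_alg K) (Lt L)) E ->
     ((#|F| ^ n).-1 %| #|('Gal(E / 1%VS))%g|)%N).
Proof.
move=> n1 hq hdeg hmon; rewrite /has_qdeg in hdeg.
have q2 : (1 < #|F|)%N := finNzRing_gt1 F.
have L0 : L`_0 = 0.
  apply/eqP; apply/negPn/negP => /hq [k ek].
  have : (0 < #|F| ^ k)%N by rewrite expn_gt0 (ltnW q2).
  by rewrite -ek.
have qn2 : (1 < #|F| ^ n)%N.
  apply: leq_trans q2 _; rewrite -{1}(expn1 #|F|); apply: leq_pexp2l => //; exact: ltnW (finNzRing_gt1 F).
have sL : (2 < size L)%N.
  by rewrite hdeg ltnS.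
have hP := irr_part _ _ L0 sL.
split; first exact: hP.
move=> K E hs.
set P := Lt L %/ 'X.
have sP : size P = (#|F| ^ n)%N by rewrite size_P // hdeg.
set pK := map_poly (in_alg K) (Lt L) in hs.
have gal : galois 1 E.
  apply/splitting_galoisField; exists pK; split => //.
    by apply/polyOver1P; exists (Lt L).
  by rewrite separable_map sep_Lt.
have hdim : #|('Gal(E / 1%VS))%g| = \dim E by rewrite -galois_dim // dimv1 divn1.
have [rs hrs hE] := hs.
have Pdv : P %| Lt L.
  by rewrite /P [X in _ %| X]Lt_eq // P_eq // dvdp_mulr ?dvdpp.
set PK := map_poly (in_alg K) P.
have PKdv : PK %| \prod_(z <- rs) ('X - z%:P) by rewrite -(eqp_dvdr _ hrs) dvdp_map.
have [m hm] := dvdp_prod_XsubC PKdv.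
have sPK : size PK = size P by rewrite size_map_poly.
move: hm; case E1: (mask m rs) => [|r0 s] hm.
  by move: (eqp_size hm); rewrite big_nil size_poly1 sPK sP => e; rewrite e in qn2.
have r0rs : r0 \in rs by apply: (@mem_mask _ _ m); rewrite E1 mem_head.
have rootr0 : root PK r0 by rewrite (eqp_root hm) root_prod_XsubC mem_head.
have r0E : r0 \in E by rewrite -hE seqv_sub_adjoin.
have sMin : size (minPoly 1 r0) = size P.
  have /polyOver1P [mm emm] := minPolyOver 1 r0.
  have dv : mm %| P.
    rewrite -(dvdp_map (in_alg K)) -emm minPoly_dvdp //.
    by apply/polyOver1P; exists P.
  have smm : size mm != 1%N.
    by rewrite -(size_map_poly (in_alg K)) -emm size_minPoly.
  rewrite emm size_map_poly; apply: eqp_size; exact: hP.2 mm smm dv.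
have : (\dim <<1; r0>> %| \dim E)%N.
  by apply: field_dimS; apply/FadjoinP; split => //; exact: sub1v.
rewrite dim_Fadjoin dimv1 muln1 hdim -sP -sMin size_minPoly //.
Qed.
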